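(* Let $V=\mathbb{C}x+\mathbb{C}y+\mathbb{C}z$ with the action of the Heisenberg group $H_3$ given by $e_1\cdot x=z,\ e_1\cdot y=x,\ e_1\cdot z=y$, $e_2\cdot x=x,\ e_2\cdot y=\omega y,\ e_2\cdot z=\omega^2 z$ ($\omega$ a primitive third root of unity), extended diagonally to tensor powers. For $p=[a:b:c]\in\mathbb{P}^2$ let $W_p\subset V\otimes V$ be the span of $ayz+bzy+cx^2,\ azx+bxz+cy^2,\ axy+byx+cz^2$. Then for each $p\in\{[1:0:0],[0:1:0],[0:0:1]\}$ (the vertices of $\mathbf{V}(abc)$), one has $W_p\otimes V\cap V\otimes W_p\cong \chi_{0,0}\oplus\chi_{1,0}\oplus\chi_{2,0}$ as $H_3$-representations; in particular $(W_p\otimes V\cap V\otimes W_p)^{H_3}$ is 1-dimensional.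
   Context: $H_3=\langle e_1,e_2\mid [e_1,e_2]\text{ central},\ e_1^3=e_2^3=1\rangle$. $\chi_{a,b}$ is the 1-dimensional representation with $\chi_{a,b}(e_1)=\omega^a$, $\chi_{a,b}(e_2)=\omega^b$. The intersection is taken inside $V\otimes V\otimes V$. *)

(* Defs.v *)
From HB Require Import structures.
From mathcomp Require Import all_boot all_order all_algebra algC.
From mathcomp Require Import mxtens.
Set Implicit Arguments. Unset Strict Implicit. Unset Printing Implicit Defensive.
Import GRing.Theory Num.Theory.
Local Open Scope ring_scope.

(* V = C x + C y + C z, vectors are row vectors 'rV[algC]_3,
   x = e_0, y = e_1, z = e_2.  Tensor products are Kronecker products
   (mxtens: row-major indexing, associative). *)
Definition basis3 (i : 'I_3) : 'rV[algC]_3 := delta_mx 0 i.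
Definition vx := basis3 (inord 0).
Definition vy := basis3 (inord 1).
Definition vz := basis3 (inord 2).

(* Action of the generators e1, e2 of H_3 on V, acting on row vectors
   v |-> v *m M :  e1: x->z, y->x, z->y ;  e2: x->x, y->w y, z->w^2 z. *)
Definition E1 : 'M[algC]_3 :=
  \matrix_(i < 3, j < 3) (val j == ((val i + 2) %% 3)%N)%:R.
Definition E2 (w : algC) : 'M[algC]_3 := diag_mx (\row_(i < 3) w ^+ val i).

Definition tens3 (M : 'M[algC]_3) : 'M[algC]_(3 * 3 * 3) := M *t M *t M.

Definition Wp (a b c : algC) : 'M[algC]_(3, 3 * 3) :=
  \matrix_(i < 3) nth 0
    [:: a *: (vy *t vz) + b *: (vz *t vy) + c *: (vx *t vx);
        a *: (vz *t vx) + b *: (vx *t vz) + c *: (vy *t vy);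
        a *: (vx *t vy) + b *: (vy *t vx) + c *: (vz *t vz)] i.

Definition Ip (a b c : algC) : 'M[algC]_(3 * 3 * 3) :=
  ((Wp a b c *t (1%:M : 'M[algC]_3)) :&: ((1%:M : 'M[algC]_3) *t Wp a b c))%MS.

(* The 1-dimensional representation chi_{k,l}: e1 |-> w^k, e2 |-> w^l.
   The direct sum chi_{k1,l1} + chi_{k2,l2} + chi_{k3,l3} acts on C^3 by
   the diagonal matrices below. *)
Definition chi_sum_e1 (w : algC) (k1 k2 k3 : nat) : 'M[algC]_3 :=
  diag_mx (\row_(i < 3) nth 0 [:: w ^+ k1; w ^+ k2; w ^+ k3] i).
Definition chi_sum_e2 (w : algC) (l1 l2 l3 : nat) : 'M[algC]_3 :=
  diag_mx (\row_(i < 3) nth 0 [:: w ^+ l1; w ^+ l2; w ^+ l3] i).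

(* Isomorphism of H_3-representations between the H_3-stable subspace U of
   V(x)V(x)V (with generators acting by T1, T2) and C^3 with generators acting
   by D1, D2: a linear isomorphism C^3 -> U (given by the rows of B, a basis of
   U) intertwining the actions of the generators e1, e2 (which generate H_3). *)
Definition rep_iso_to (n : nat) (U T1 T2 : 'M[algC]_n) (D1 D2 : 'M[algC]_3) :=
  exists B : 'M[algC]_(3, n),
    [/\ row_free B, (B == U)%MS, B *m T1 = D1 *m B & B *m T2 = D2 *m B].

Definition invariants (n : nat) (U T1 T2 : 'M[algC]_n) : 'M[algC]_n :=
  (U :&: kermx (T1 - 1%:M) :&: kermx (T2 - 1%:M))%MS.

(* Main.v *)
Require Import Defs.
From HB Require Import structures.
From mathcomp Require Import all_boot all_order all_algebra algC.
From mathcomp Require Import mxtens.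
From mathcomp Require Import ring.
Import GRing.Theory Num.Theory.
Local Open Scope ring_scope.
Set Implicit Arguments. Unset Strict Implicit. Unset Printing Implicit Defensive.
Local Notation idx := mxtens_index.


Lemma idx_eq m n (x y : 'I_m * 'I_n) : (idx x == idx y) = (x == y).
Proof. exact: (can_eq (@mxtens_indexK m n)). Qed.

Lemma tens_delta m n (i : 'I_m) (j : 'I_n) :
  (delta_mx 0 i : 'rV[algC]_m) *t (delta_mx 0 j : 'rV[algC]_n) = delta_mx 0 (idx (i, j)).
Proof.
apply/matrixP => r c; case: (mxtens_indexP r) => r1 r2; case: (mxtens_indexP c) => c1 c2.
rewrite tensmxE !mxE idx_eq !ord1 !eqxx /= -natrM mulnb.
by rewrite xpair_eqE.
Qed.

Definition rowsmx m n (h : 'I_m -> 'I_n) : 'M[algC]_(m, n) := \matrix_i delta_mx 0 (h i).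

Lemma rowsmxE m n (h : 'I_m -> 'I_n) i j : rowsmx h i j = (h i == j)%:R.
Proof. by rewrite /rowsmx !mxE /= eq_sym. Qed.

Lemma tens_rowsmx m1 n1 m2 n2 (h1 : 'I_m1 -> 'I_n1) (h2 : 'I_m2 -> 'I_n2) :
  rowsmx h1 *t rowsmx h2 =
  rowsmx (fun r => idx (h1 (mxtens_unindex r).1, h2 (mxtens_unindex r).2)).
Proof.
apply/matrixP => r c; case: (mxtens_indexP r) => r1 r2; case: (mxtens_indexP c) => c1 c2.
by rewrite tensmxE !rowsmxE mxtens_indexK /= idx_eq -natrM mulnb xpair_eqE.
Qed.

Lemma one_rowsmx n : (1%:M : 'M[algC]_n) = rowsmx id.
Proof. by apply/matrixP => i j; rewrite rowsmxE mxE. Qed.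

Lemma rowsmx_row m n (h : 'I_m -> 'I_n) r : ((delta_mx 0 (h r) : 'rV[algC]_n) <= rowsmx h)%MS.
Proof. by have := row_sub r (rowsmx h); rewrite /rowsmx rowK. Qed.

Lemma rowsmx_supp m n (h : 'I_m -> 'I_n) (v : 'rV[algC]_n) c :
  (v <= rowsmx h)%MS -> (forall r, h r != c) -> v 0 c = 0.
Proof.
case/submxP => u -> H; rewrite !mxE; apply: big1 => r _.
by rewrite rowsmxE (negbTE (H r)) mulr0.
Qed.

Lemma sub_deltas m n (v : 'rV[algC]_n) (A : 'M_(m, n)) :
  (forall c, v 0 c != 0 -> ((delta_mx 0 c : 'rV_n) <= A)%MS) -> (v <= A)%MS.
Proof.
move=> H; rewrite [v]row_sum_delta; apply/summx_sub => c _.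
have [->|nz] := eqVneq (v 0 c) 0; first by rewrite scale0r sub0mx.
by apply: scalemx_sub; exact: H.
Qed.

Lemma tensZl m n p q k (A : 'M[algC]_(m, n)) (B : 'M[algC]_(p, q)) :
  (k *: A) *t B = k *: (A *t B).
Proof. by apply/matrixP => i j; rewrite !mxE mulrA. Qed.
Lemma tensZr m n p q k (A : 'M[algC]_(m, n)) (B : 'M[algC]_(p, q)) :
  A *t (k *: B) = k *: (A *t B).
Proof. by apply/matrixP => i j; rewrite !mxE mulrCA. Qed.

Definition o3 (n : nat) : 'I_3 := Ordinal (ltn_pmod n (isT : (0 < 3)%N)).
Definition sig3 (i : 'I_3) : 'I_3 := o3 (i + 2).

Lemma tens3E (M : 'M[algC]_3) a b c a' b' c' :
  tens3 M (idx (idx (a, b), c)) (idx (idx (a', b'), c')) = M a a' * M b b' * M c c'.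
Proof. by rewrite /tens3 !tensmxE. Qed.

Lemma rowT1 a b c :
  row (idx (idx (a, b), c)) (tens3 E1) = delta_mx 0 (idx (idx (sig3 a, sig3 b), sig3 c)).
Proof.
apply/matrixP => r j; case: (mxtens_indexP j) => j12 c'; case: (mxtens_indexP j12) => a' b'.
rewrite mxE tens3E !mxE ord1 eqxx !idx_eq !xpair_eqE /= -!natrM !mulnb.
by rewrite idx_eq xpair_eqE.
Qed.

Lemma rowT2 w a b c :
  row (idx (idx (a, b), c)) (tens3 (E2 w)) =
  w ^+ (a + b + c) *: delta_mx 0 (idx (idx (a, b), c)).
Proof.
apply/matrixP => r j; case: (mxtens_indexP j) => j12 c'; case: (mxtens_indexP j12) => a' b'.
rewrite mxE tens3E !mxE ord1 eqxx !idx_eq !xpair_eqE /=.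
rewrite idx_eq xpair_eqE.
have [e|ne] := eqVneq a a'; last by rewrite /= !mulr0n ?mulr0 ?mul0r ?mulr0.
have [e'|ne] := eqVneq b b'; last by rewrite /= !mulr0n ?mulr0 ?mul0r ?mulr0.
have [e''|ne] := eqVneq c c'; last by rewrite /= !mulr0n ?mulr0 ?mul0r ?mulr0.
subst; by rewrite /= !mulr1n !mulr1 -!exprD.
Qed.


Definition Fm (w : algC) : 'M[algC]_3 := \matrix_(k, j) w ^+ (2 * k * j).
Definition Fi (w : algC) : 'M[algC]_3 := \matrix_(k, j) w ^+ (k * j).
Definition succ3 (i : 'I_3) : 'I_3 := o3 (i + 1).

Lemma w3P (w : algC) (hw : 3.-primitive_root w) : w ^+ 3 = 1.
Proof. exact: prim_expr_order. Qed.

Lemma wEP (w : algC) (hw : 3.-primitive_root w) n : w ^+ n = nth 0 [:: 1; w; w * w] (n %% 3).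
Proof.
by rewrite -(expr_mod n (w3P hw)); case: (n %% 3)%N (ltn_pmod n (isT : (0 < 3)%N)) => [|[|[|//]]] _; rewrite ?expr0 ?expr1 ?expr2.
Qed.

Lemma w1P (w : algC) (hw : 3.-primitive_root w) : w != 1.
Proof. by have := eq_prim_root_expr hw 1 0; rewrite expr1 expr0 => ->. Qed.

Lemma wwP (w : algC) (hw : 3.-primitive_root w) : w * w = -1 - w.
Proof.
have : (w - 1) * (w * w + w + 1) = 0.
  have -> : (w - 1) * (w * w + w + 1) = w ^+ 3 - 1 by ring.
  by rewrite (w3P hw) subrr.
move/eqP; rewrite mulf_eq0 subr_eq0 (negbTE (w1P hw)) /= => /eqP h.
by apply/eqP; rewrite -subr_eq0 -h; apply/eqP; ring.
Qed.

Lemma FFi (w : algC) (hw : 3.-primitive_root w) : Fm w *m Fi w = 3%:R%:M.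
Proof.
have wE := wEP hw; have ww := wwP hw.
apply/matrixP => i j; rewrite !mxE !big_ord_recr big_ord0 /= !mxE.
case: i => [[|[|[|//]]] ?]; case: j => [[|[|[|//]]] ?] /=; rewrite -!exprD !wE /= ?ww; ring.
Qed.

Lemma FP (w : algC) (hw : 3.-primitive_root w) :
  Fm w *m rowsmx succ3 = chi_sum_e1 w 0 1 2 *m Fm w.
Proof.
have wE := wEP hw; have ww := wwP hw.
apply/matrixP => i j; rewrite !mxE !big_ord_recr !big_ord0 /= !mxE.
case: i => [[|[|[|//]]] ?]; case: j => [[|[|[|//]]] ?] /=; rewrite ?mulr1n ?mulr0n -?exprD !wE /= ?ww; ring.
Qed.

Lemma D2one w : chi_sum_e2 w 0 0 0 = 1%:M.
Proof.
apply/matrixP => i j; rewrite !mxE.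
by case: i => [[|[|[|//]]] ?] /=; rewrite expr0.
Qed.


Definition hwf (fu fv : nat -> nat) (i : 'I_3) : 'I_(3 * 3) := idx (o3 (fu i), o3 (fv i)).
Definition gf (fa fb fc : nat -> nat) (k : 'I_3) : 'I_(3 * 3 * 3) :=
  idx (idx (o3 (fa k), o3 (fb k)), o3 (fc k)).
Definition FXn (fu fv : nat -> nat) (r : nat) : nat :=
  (((fu (r %/ 3) %% 3) * 3 + fv (r %/ 3) %% 3) * 3 + r %% 3)%N.
Definition FYn (fu fv : nat -> nat) (r : nat) : nat :=
  ((r %/ 3) * (3 * 3) + ((fu (r %% 3) %% 3) * 3 + fv (r %% 3) %% 3))%N.
Definition Gn (fa fb fc : nat -> nat) (k : nat) : nat :=
  (((fa k %% 3) * 3 + fb k %% 3) * 3 + fc k %% 3)%N.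

Section Gen.
Lemma main_gen (w : algC) (hw : 3.-primitive_root w) (a b c : algC)
  (fu fv fa fb fc : nat -> nat)
  (HW : Wp a b c = rowsmx (hwf fu fv))
  (C1 : all (fun c => ~~ has (fun r => FXn fu fv r == c) (iota 0 9)
              || ~~ has (fun r => FYn fu fv r == c) (iota 0 9)
              || has (fun k => Gn fa fb fc k == c) (iota 0 3)) (iota 0 27))
  (C2 : all (fun k => has (fun r => FXn fu fv r == Gn fa fb fc k) (iota 0 9)
              && has (fun r => FYn fu fv r == Gn fa fb fc k) (iota 0 9)) (iota 0 3))
  (C3 : all (fun k => [&& (fa k %% 3 + 2) %% 3 == fa ((k + 1) %% 3) %% 3,
                         (fb k %% 3 + 2) %% 3 == fb ((k + 1) %% 3) %% 3 &
                         (fc k %% 3 + 2) %% 3 == fc ((k + 1) %% 3) %% 3]%N) (iota 0 3))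
  (C4 : all (fun k => (fa k %% 3 + fb k %% 3 + fc k %% 3) %% 3 == 0)%N (iota 0 3))
  (C5 : all (fun i => all (fun j => (Gn fa fb fc i == Gn fa fb fc j) ==> (i == j)) (iota 0 3)) (iota 0 3)) :
  rep_iso_to (Ip a b c) (tens3 E1) (tens3 (E2 w))
    (chi_sum_e1 w 0 1 2) (chi_sum_e2 w 0 0 0)
  /\ \rank (invariants (Ip a b c) (tens3 E1) (tens3 (E2 w))) = 1%N.
Proof.
set g := gf fa fb fc.
have hX : Wp a b c *t (1%:M : 'M_3) =
   rowsmx (fun r => idx (hwf fu fv (mxtens_unindex r).1, id (mxtens_unindex r).2)).
  by rewrite HW one_rowsmx tens_rowsmx.
have hY : (1%:M : 'M_3) *t Wp a b c =
   rowsmx (fun r => idx (id (mxtens_unindex r).1, hwf fu fv (mxtens_unindex r).2)).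
  by rewrite HW one_rowsmx tens_rowsmx.
have kin (k : 'I_3) : (k : nat) \in iota 0 3 by rewrite mem_iota add0n ltn_ord.
have memX k : ((delta_mx 0 (g k) : 'rV_(3 * 3 * 3)) <= Wp a b c *t (1%:M : 'M_3))%MS.
  move: (allP C2 k (kin k)) => /andP [/hasP [r hr /eqP er] _].
  have r9 : (r < 3 * 3)%N by move: hr; rewrite mem_iota.
  have -> : g k = idx (hwf fu fv (mxtens_unindex (Ordinal r9)).1, id (mxtens_unindex (Ordinal r9)).2).
    by apply: val_inj; exact: (esym er).
  by rewrite hX; apply: rowsmx_row.
have memY k : ((delta_mx 0 (g k) : 'rV_(3 * 3 * 3)) <= (1%:M : 'M_3) *t Wp a b c)%MS.
  move: (allP C2 k (kin k)) => /andP [_ /hasP [r hr /eqP er]].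
  have r9 : (r < 3 * 3)%N by move: hr; rewrite mem_iota.
  have -> : g k = idx (id (mxtens_unindex (Ordinal r9)).1, hwf fu fv (mxtens_unindex (Ordinal r9)).2).
    by apply: val_inj; exact: (esym er).
  by rewrite hY; apply: rowsmx_row.
have suppI (v : 'rV_(3 * 3 * 3)) : (v <= Ip a b c)%MS ->
    forall cc, v 0 cc != 0 -> exists k, cc = g k.
  move=> vI cc nz.
  have vX : (v <= Wp a b c *t (1%:M : 'M_3))%MS by apply: submx_trans vI _; apply: capmxSl.
  have vY : (v <= (1%:M : 'M_3) *t Wp a b c)%MS by apply: submx_trans vI _; apply: capmxSr.
  rewrite hX in vX; rewrite hY in vY.
  have hx : has (fun r => FXn fu fv r == cc) (iota 0 9).
    apply: contraR nz => hn; apply/eqP; apply: (rowsmx_supp vX) => r.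
    apply: contra hn => /eqP e; apply/hasP; exists (val r).
      by rewrite mem_iota add0n; exact: ltn_ord r.
    by apply/eqP; rewrite -e.
  have hy : has (fun r => FYn fu fv r == cc) (iota 0 9).
    apply: contraR nz => hn; apply/eqP; apply: (rowsmx_supp vY) => r.
    apply: contra hn => /eqP e; apply/hasP; exists (val r).
      by rewrite mem_iota add0n; exact: ltn_ord r.
    by apply/eqP; rewrite -e.
  have cin : (cc : nat) \in iota 0 27 by rewrite mem_iota add0n; exact: ltn_ord cc.
  move: (allP C1 _ cin) => /orP [/orP [/negP //|/negP //]|/hasP [k hk /eqP ek]].
  have k3 : (k < 3)%N by move: hk; rewrite mem_iota.
  by exists (Ordinal k3); apply: val_inj; exact: (esym ek).
have M3I : (rowsmx g == Ip a b c)%MS.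
  apply/andP; split.
    rewrite /Ip sub_capmx; apply/andP; split; apply/row_subP => k; rewrite /rowsmx rowK.
      exact: memX.
    exact: memY.
  apply/row_subP => i; apply: sub_deltas => cc nz.
  have [k ->] := suppI _ (row_sub i _) cc nz.
  exact: rowsmx_row.
have M3T1 : rowsmx g *m tens3 E1 = rowsmx succ3 *m rowsmx g.
  apply/row_matrixP => k; rewrite !row_mul /rowsmx !rowK -!rowE rowK /g /gf rowT1.
  congr delta_mx; apply: val_inj => /=.
  move: (allP C3 k (kin k)) => /and3P [/eqP e1 /eqP e2 /eqP e3].
  by rewrite e1 e2 e3.
have M3T2 : rowsmx g *m tens3 (E2 w) = rowsmx g.
  apply/row_matrixP => k; rewrite !row_mul /rowsmx !rowK -!rowE /g /gf rowT2.
  move: (allP C4 k (kin k)) => /eqP e4.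
  by rewrite -(expr_mod _ (w3P hw)) /= e4 expr0 scale1r.
have ginj : injective g.
  move=> i j /(congr1 val) e; apply: val_inj.
  have e' : Gn fa fb fc i = Gn fa fb fc j := e.
  by move: (allP (allP C5 _ (kin i)) _ (kin j)); rewrite e' eqxx => /eqP.
have M3free : row_free (rowsmx g).
  apply/row_freeP; exists (rowsmx g)^T; apply/matrixP => i j.
  rewrite !mxE (bigD1 (g i)) //= big1 ?addr0.
    rewrite !rowsmxE eqxx mul1r mxE (rowsmxE g j (g i)) (inj_eq ginj) eq_sym.
    by [].
  by move=> cc ne; rewrite (rowsmxE g i cc) eq_sym (negbTE ne) mul0r.
have Fu : Fm w \in unitmx.
  have h3 : (3%:R : algC) != 0 by rewrite pnatr_eq0.
  have : Fm w *m ((3%:R)^-1 *: Fi w) = 1%:M.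
    by rewrite -scalemxAr FFi // scale_scalar_mx mulVf.
  by case/mulmx1_unit.
set B := Fm w *m rowsmx g.
have BI : (B == Ip a b c)%MS.
  apply/eqmxP; apply: eqmx_trans (eqmxMfull _ _) _; first by rewrite row_full_unit.
  exact/eqmxP.
have Bfree : row_free B by rewrite /row_free mxrankMfree // mxrank_unit.
have BT1 : B *m tens3 E1 = chi_sum_e1 w 0 1 2 *m B.
  by rewrite -mulmxA M3T1 mulmxA FP // -mulmxA.
have BT2 : B *m tens3 (E2 w) = chi_sum_e2 w 0 0 0 *m B.
  by rewrite D2one mul1mx -mulmxA M3T2.
split; first by exists B; split.
move/andP: BI => [BsI IsB].
set v0 := row 0 B.
have r0D1 : row 0 (chi_sum_e1 w 0 1 2) = delta_mx 0 0.
  apply/matrixP => i j; rewrite !mxE.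
  case: j => [[|[|[|//]]] ?]; rewrite ord1 /= ?expr0 ?mulr1n ?mulr0n /=; by [].
have v0T1 : v0 *m tens3 E1 = v0 by rewrite /v0 -row_mul BT1 row_mul r0D1 -rowE.
have v0T2 : v0 *m tens3 (E2 w) = v0 by rewrite /v0 -row_mul BT2 D2one mul1mx.
have v0nz : v0 != 0.
  apply/eqP => /eqP; rewrite /v0 rowE -(mul0mx _ B) => /eqP /(row_free_inj Bfree) /matrixP /(_ 0 0).
  by rewrite !mxE eqxx /= => /eqP; rewrite oner_eq0.
have inv_eq : (invariants (Ip a b c) (tens3 E1) (tens3 (E2 w)) == v0)%MS.
  apply/andP; split.
    apply/row_subP => i; set v := row i _.
    have vI1 : (v <= Ip a b c :&: kermx (tens3 E1 - 1%:M))%MS.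
      by apply: submx_trans (row_sub i _) _; apply: capmxSl.
    have vI : (v <= Ip a b c)%MS by apply: submx_trans vI1 _; apply: capmxSl.
    have vK : (v <= kermx (tens3 E1 - 1%:M))%MS by apply: submx_trans vI1 _; apply: capmxSr.
    have vB : (v <= B)%MS := submx_trans vI IsB.
    case/submxP: vB => u vu.
    move/sub_kermxP: vK; rewrite mulmxBr mulmx1 => /eqP; rewrite subr_eq0 => /eqP vT.
    have : (u *m chi_sum_e1 w 0 1 2) *m B = u *m B by rewrite -mulmxA -BT1 mulmxA -vu vT.
    move/(row_free_inj Bfree) => uD.
    have uE : u = u 0 0 *: delta_mx 0 0.
      apply/matrixP => i' j; rewrite !mxE ord1.
      case: j => [[|[|[|//]]] Hj]; have := congr1 (fun M : 'rV[algC]_3 => M 0 (Ordinal Hj)) uD;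
        rewrite /chi_sum_e1 mul_mx_diag !mxE /=.
      - by move=> _; rewrite mulr1; congr (u 0 _); exact: val_inj.
      - move=> h; rewrite mulr0; apply/eqP; move/eqP: h.
        rewrite -subr_eq0 -{2}(mulr1 (u 0 _)) -mulrBr mulf_eq0 subr_eq0 expr1 (negbTE (w1P hw)) orbF.
        by [].
      - move=> h; rewrite mulr0; apply/eqP; move/eqP: h.
        have w2 : w ^+ 2 != 1 by have := eq_prim_root_expr hw 2 0; rewrite expr0 => ->.
        rewrite -subr_eq0 -{2}(mulr1 (u 0 _)) -mulrBr mulf_eq0 subr_eq0 (negbTE w2) orbF.
        by [].
    by rewrite vu uE -scalemxAl -rowE scalemx_sub.
  rewrite !sub_capmx -andbA; apply/and3P; split.
  - by rewrite -sub_capmx; apply: submx_trans BsI; apply: row_sub.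
  - by rewrite sub_kermx mulmxBr mulmx1 v0T1 subrr.
  - by rewrite sub_kermx mulmxBr mulmx1 v0T2 subrr.
by rewrite (eqmx_rank inv_eq) rank_rV v0nz.
Qed.
End Gen.


Ltac hw_tac :=
  apply/row_matrixP; case => [[|[|[|//]]] Hi]; rewrite /Wp /rowsmx !rowK /=; rewrite !scale1r !scale0r ?addr0 ?add0r tens_delta;
  congr delta_mx; apply: val_inj; rewrite /= !inordK; by [].

Lemma HW1 : Wp 1 0 0 = rowsmx (hwf (fun i => nth 0%N [:: 1; 2; 0]%N i) (fun i => nth 0%N [:: 2; 0; 1]%N i)).
Proof. hw_tac. Qed.
Lemma HW2 : Wp 0 1 0 = rowsmx (hwf (fun i => nth 0%N [:: 2; 0; 1]%N i) (fun i => nth 0%N [:: 1; 2; 0]%N i)).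
Proof. hw_tac. Qed.
Lemma HW3 : Wp 0 0 1 = rowsmx (hwf (fun i => nth 0%N [:: 0; 1; 2]%N i) (fun i => nth 0%N [:: 0; 1; 2]%N i)).
Proof. hw_tac. Qed.

Unset Implicit Arguments.
Theorem mainTheorem6 (w : algC) (hw : 3.-primitive_root w) (a b c : algC)
  (hp : (a, b, c) \in [:: (1, 0, 0); (0, 1, 0); (0, 0, 1)]) :
  rep_iso_to (Ip a b c) (tens3 E1) (tens3 (E2 w))
    (chi_sum_e1 w 0 1 2) (chi_sum_e2 w 0 0 0)
  /\ \rank (invariants (Ip a b c) (tens3 E1) (tens3 (E2 w))) = 1%N.
Proof.
move: hp; rewrite !inE => /or3P [] /eqP [-> -> ->].
- apply: (main_gen hw HW1 (fa := fun i => nth 0%N [:: 0; 2; 1]%N i)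
     (fb := fun i => nth 0%N [:: 1; 0; 2]%N i) (fc := fun i => nth 0%N [:: 2; 1; 0]%N i));
  vm_compute; reflexivity.
- apply: (main_gen hw HW2 (fa := fun i => nth 0%N [:: 0; 2; 1]%N i)
     (fb := fun i => nth 0%N [:: 2; 1; 0]%N i) (fc := fun i => nth 0%N [:: 1; 0; 2]%N i));
  vm_compute; reflexivity.
- apply: (main_gen hw HW3 (fa := fun i => nth 0%N [:: 0; 2; 1]%N i)
     (fb := fun i => nth 0%N [:: 0; 2; 1]%N i) (fc := fun i => nth 0%N [:: 0; 2; 1]%N i));
  vm_compute; reflexivity.
Qed.
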